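(* Let $n\ge 2$ and $\alpha\in[0,1]$. If $T$ is a tree of order $n$, then \[ \rho(A_\alpha(T))\le\frac{\alpha n+\sqrt{\alpha^2n^2+4(n-1)(1-2\alpha)}}{2}, \] with equality if and only if $T$ is the star $K_{1,n-1}$.
   Context: For a graph $G$ let $A(G)$ be its adjacency matrix and $D(G)$ the diagonal matrix of its vertex degrees. For $\alpha\in[0,1]$ define $A_\alpha(G)=\alpha D(G)+(1-\alpha)A(G)$. $\rho(M)$ denotes the spectral radius (largest eigenvalue) of a real symmetric nonnegative matrix $M$. *)

(* Defs.v *)
(* Real numbers: an arbitrary real closed field R. *)
From HB Require Import structures.
From mathcomp Require Import all_boot all_order all_algebra.
Set Implicit Arguments. Unset Strict Implicit. Unset Printing Implicit Defensive.
Import Order.TTheory GRing.Theory Num.Theory.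
Local Open Scope ring_scope.

Definition simple_graph (n : nat) (e : rel 'I_n) : Prop :=
  irreflexive e /\ symmetric e.

Definition connected_graph (n : nat) (e : rel 'I_n) : Prop :=
  forall x y : 'I_n, connect e x y.

Definition acyclic_graph (n : nat) (e : rel 'I_n) : Prop :=
  ~ (exists s : seq 'I_n, [/\ (3 <= size s)%N, uniq s & cycle e s]).

Definition is_tree (n : nat) (e : rel 'I_n) : Prop :=
  [/\ simple_graph e, connected_graph e & acyclic_graph e].

Definition is_star (n : nat) (e : rel 'I_n) : Prop :=
  exists c : 'I_n, forall i j : 'I_n, e i j = (i != j) && ((i == c) || (j == c)).

Definition vdeg (n : nat) (e : rel 'I_n) (i : 'I_n) : nat := #|[set j | e i j]|.

Definition adj_mx (R : nzRingType) (n : nat) (e : rel 'I_n) : 'M[R]_n :=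
  \matrix_(i, j) (e i j)%:R.

Definition deg_mx (R : nzRingType) (n : nat) (e : rel 'I_n) : 'M[R]_n :=
  \matrix_(i, j) ((i == j)%:R * (vdeg e i)%:R).

Definition A_alpha (R : nzRingType) (n : nat) (e : rel 'I_n) (alpha : R) : 'M[R]_n :=
  alpha *: deg_mx R e + (1 - alpha) *: adj_mx R e.

Definition is_spectral_radius (R : realFieldType) (n : nat) (M : 'M[R]_n) (r : R) : Prop :=
  eigenvalue M r /\ forall l : R, eigenvalue M l -> l <= r.

(* Main.v *)
Require Import Defs.
From HB Require Import structures.
From mathcomp Require Import all_boot all_order all_algebra.
From mathcomp Require Import zify ring lra.
Set Implicit Arguments. Unset Strict Implicit. Unset Printing Implicit Defensive.
Import Order.TTheory GRing.Theory Num.Theory.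

Section Graph.
Variables (n : nat) (e : rel 'I_n).
Hypothesis irr : irreflexive e.
Hypothesis sym : symmetric e.
Hypothesis acy : acyclic_graph e.

Lemma no_tri a b c : e a b -> e b c -> e c a -> False.
Proof.
move=> ab bc ca; apply: acy; exists [:: a; b; c]; split => //=.
rewrite !inE; apply/and3P; split.
- apply/norP; split; apply/eqP => E; subst.
  + by rewrite irr in ab.
  + by rewrite irr in ca.
- by apply/eqP => E; subst; rewrite irr in bc.
- by [].
by rewrite ab bc ca.
Qed.

Lemma no_sq a b c d : e a b -> e b c -> e c d -> e d a -> a != c -> b != d -> False.
Proof.
move=> ab bc cd da ac bd; apply: acy; exists [:: a; b; c; d]; split => //=.
rewrite !inE negb_or negb_or ac.
have ab' : a != b by apply/eqP => E; subst; rewrite irr in ab.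
have ad' : a != d by apply/eqP => E; subst; rewrite irr in da.
have bc' : b != c by apply/eqP => E; subst; rewrite irr in bc.
have cd' : c != d by apply/eqP => E; subst; rewrite irr in cd.
rewrite ?ab' ?ad' ?bc' ?bd ?cd' /= negb_or bc' bd /=; by [].
by rewrite ab bc cd da.
Qed.

Lemma deg_le i : (vdeg e i <= n.-1)%N.
Proof.
rewrite /vdeg; have := cardsC1 i; rewrite card_ord => <-; apply: subset_leq_card.
apply/subsetP => j; rewrite !inE => ij; apply/eqP => E; subst.
by rewrite irr in ij.
Qed.

Lemma S_le u : (\sum_(w | e u w) vdeg e w <= n.-1)%N.
Proof.
have -> : (\sum_(w | e u w) vdeg e w = #|[set p : 'I_n * 'I_n | e u p.1 && e p.1 p.2]|)%N.
  rewrite -sum1_card.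
  transitivity (\sum_(w | e u w) \sum_(z | e w z) 1)%N.
    by apply: eq_bigr => w _; rewrite /vdeg -sum1_card; apply: eq_bigl => z; rewrite inE.
  by rewrite pair_big_dep; apply: eq_bigl => p; rewrite inE.
pose f (p : 'I_n * 'I_n) := if p.2 == u then p.1 else p.2.
rewrite -(card_in_imset (f := f)); last first.
  move=> [w z] [w' z']; rewrite !inE /f /= => /andP [uw wz] /andP [uw' wz'].
  case: eqP => zu; case: eqP => z'u.
  - by move=> E; rewrite E zu z'u.
  - move=> E; exfalso; apply: (@no_tri u w' z') => //; by rewrite sym -E.
  - move=> E; exfalso; apply: (@no_tri u w z) => //; by rewrite sym E.
  - move=> E; case: (eqVneq w w') => [<-|ww']; first by rewrite E.
    exfalso; apply: (@no_sq u w z w') => //.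
    + by rewrite E sym.
    + by rewrite sym.
    + by rewrite eq_sym; apply/eqP.
have := cardsC1 u; rewrite card_ord => <-; apply: subset_leq_card.
apply/subsetP => x /imsetP [[w z]]; rewrite !inE /f /= => /andP [uw wz] ->.
case: (eqVneq z u) => [_|zu //]; apply/eqP => E; by rewrite E irr in uw.
Qed.

Lemma center w : vdeg e w = n.-1 -> is_star e.
Proof.
move=> dw.
have ew : forall i, e w i = (i != w).
  move=> i.
  have : [set j | e w j] =i [set~ w].
    apply/subset_cardP; first by rewrite cardsC1 card_ord.
    apply/subsetP => j; rewrite !inE => ij; apply/eqP => E; subst; by rewrite irr in ij.
  by move/(_ i); rewrite !inE.
exists w => i j.
case: (eqVneq i j) => [<-|ij]; first by rewrite irr.
case: (eqVneq i w) => [E|iw]; first by rewrite E ew eq_sym -E ij.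
case: (eqVneq j w) => [E|jw]; first by rewrite E sym ew iw.
apply/negbTE/negP => eij; apply: (@no_tri i j w) => //.
  by rewrite sym ew.
by rewrite ew.
Qed.

Hypothesis conn : connected_graph e.
Hypothesis n2 : (2 <= n)%N.

Lemma has_nb i : exists a, e i a.
Proof.
have [j ij] : exists j : 'I_n, i != j.
  case: (eqVneq (val i) 0%N) => i0.
    have h : (1 < n)%N by [].
    by exists (Ordinal h); apply/eqP => E; move: i0; rewrite E.
  have h : (0 < n)%N by apply: leq_ltn_trans n2.
  by exists (Ordinal h); apply/eqP => E; move: i0; rewrite E.
case/connectP: (conn i j) => [[|a p]] /=.
  by move=> _ E; rewrite E eqxx in ij.
by move=> /andP [ia _] _; exists a.
Qed.

Lemma deg_ge1 i : (0 < vdeg e i)%N.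
Proof.
have [a ia] := has_nb i.
by apply/card_gt0P; exists a; rewrite inE.
Qed.

Lemma leaf_aux m : forall (x a : 'I_n) p, (n - size p <= m)%N -> e x a -> path e a p ->
  uniq [:: x, a & p] -> exists l w, e l w /\ forall y, e l y -> y = w.
Proof.
elim: m => [|m IH] x a p Hm xa Hp Hu.
all: case: (boolP [exists y, e x y && (y != a)]) => [/existsP [y /andP [xy ya]] | H];
  last first.
1,3: exists x, a; split => // y xy; apply/eqP; apply: contraNT H => ya;
     apply/existsP; exists y; by rewrite xy.
all: case: (boolP (y \in [:: x, a & p])) => yin.
1,3: move: yin; rewrite !inE (negbTE ya) /= => /orP [/eqP E|yp];
     [ by subst; rewrite irr in xy | ].
1,2: exfalso; case/splitPr: yp Hp Hu => p1 p2 Hp Hu; apply: acy;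
     exists [:: x, a & rcons p1 y]; split.
- by rewrite /= size_rcons.
- move: Hu; rewrite -cat_rcons -cat_cons -cat_cons cat_uniq; by case/andP.
- rewrite /cycle rcons_path /= last_rcons (sym y x) xy andbT xa /=.
  by move: Hp; rewrite -cat_rcons cat_path => /andP [].
- by rewrite /= size_rcons.
- move: Hu; rewrite -cat_rcons -cat_cons -cat_cons cat_uniq; by case/andP.
- rewrite /cycle rcons_path /= last_rcons (sym y x) xy andbT xa /=.
  by move: Hp; rewrite -cat_rcons cat_path => /andP [].
- exfalso.
  have : uniq [:: y, x, a & p] by rewrite /= yin.
  move/card_uniqP => /= C.
  have := max_card (mem [:: y, x, a & p]); rewrite C card_ord /=.
  move: Hm; lia.
- apply: (IH y x (a :: p)) => //.
  + by move: Hm => /=; lia.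
  + by rewrite sym.
  + by rewrite /= xa.
  + by rewrite /= yin.
Qed.

Lemma leaf : exists l w, e l w /\ forall y, e l y -> y = w.
Proof.
have h : (0 < n)%N by apply: leq_ltn_trans n2.
have [a xa] := has_nb (Ordinal h).
apply: (@leaf_aux n (Ordinal h) a [::]) => //.
  by rewrite subn0.
rewrite /= ?inE ?andbT; apply/eqP => E; by rewrite -E irr in xa.
Qed.

End Graph.

Local Open Scope ring_scope.

Lemma ar_b1 (R : realFieldType) (a b : R) :
  (b - 1) * (b - 2 * a + 1) = 0 -> a < 1 -> 1 <= b -> b = 1.
Proof. move=> *; nra. Qed.

Lemma ar_le (R : realFieldType) (x y A B : R) : x - y = A + B -> A <= 0 -> B <= 0 -> x <= y.
Proof. move=> *; lra. Qed.

Lemma ar_eq (R : realFieldType) (x y A B : R) : x - y = A + B -> A <= 0 -> B <= 0 -> x = y -> A = 0.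
Proof. move=> *; lra. Qed.

Lemma ar_ypos (R : realFieldType) (a t d : R) : a < 1 -> 0 <= t -> 1 <= d -> 0 < 1 - a - t + t * d.
Proof. move=> *; nra. Qed.


Lemma ar_sq (R : realFieldType) (b z y P Q : R) : 0 < z -> b * (z * y) <= P -> P <= z * Q ->
  Q <= b * y -> P = z * Q /\ Q = b * y.
Proof. move=> *; split; nra. Qed.

Section Alg.
Variables (R : rcfType) (n : nat) (e : rel 'I_n) (alpha : R).
Hypothesis irr : irreflexive e.
Hypothesis sym : symmetric e.

Let dR (i : 'I_n) : R := (vdeg e i)%:R.
Let M := @A_alpha R n e alpha.

Lemma Mij i j : M i j = alpha * ((i == j)%:R * dR i) + (1 - alpha) * (e i j)%:R.
Proof. by rewrite /M /A_alpha !mxE. Qed.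

Lemma colsum (w : 'I_n -> R) j :
  \sum_i w i * M i j = alpha * dR j * w j + (1 - alpha) * \sum_(i | e j i) w i.
Proof.
under eq_bigr => i _ do rewrite Mij mulrDr.
rewrite big_split /= (bigD1 j) //=.
rewrite [X in _ + X + _]big1; last by move=> i ij; rewrite (negbTE ij) /=; ring.
rewrite eqxx mul1r addr0 mulr_sumr (big_mkcond (fun i => e j i)) /=; congr (_ + _).
  by ring.
by apply: eq_bigr => i _; rewrite (sym j i); case: (e i j); rewrite /= ?mulr1 ?mulr0 ?mul0r; ring.
Qed.

Lemma sum_const_nb u (c : R) : \sum_(i | e u i) c = c * dR u.
Proof.
rewrite sumr_const /dR /vdeg mulr_natr; congr (_ *+ _).
by apply: eq_card => i; rewrite inE.
Qed.


Hypothesis acy : acyclic_graph e.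
Hypothesis conn : connected_graph e.
Hypothesis n2 : (2 <= n)%N.
Hypothesis a0 : 0 <= alpha.
Hypothesis a1 : alpha < 1.
Variable b : R.
Let N : R := n%:R.
Hypothesis KE : b ^+ 2 - alpha * N * b + (N - 1) * (2 * alpha - 1) = 0.
Hypothesis b1 : 1 <= b.
Hypothesis b3 : (3 <= n)%N -> 1 < b.

Lemma Nm1 : (n.-1)%:R = N - 1.
Proof.
have h : (0 < n)%N by apply: leq_trans n2.
by rewrite /N -{2}(prednK h) -natr1 addrK.
Qed.

Lemma N2 : 2 <= N.
Proof. by rewrite /N ler_nat. Qed.

Let t := (b - 1) / (N - 2).

Lemma tN : t * (N - 2) = b - 1.
Proof.
case: (eqVneq n 2) => [E|ne].
  have HN : N = 2 by rewrite /N E.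
  have hb : b = 1.
    move: KE; rewrite HN => KE'.
    apply: (ar_b1 _ a1 b1); rewrite -KE'; ring.
  by rewrite /t hb subrr !mul0r.
rewrite /t divfK // subr_eq0; apply/eqP => H.
move: H; rewrite /N => /eqP; rewrite eqr_nat => /eqP E; by rewrite E eqxx in ne.
Qed.

Lemma t0 : 0 <= t.
Proof. rewrite /t divr_ge0 // ?subr_ge0 //; exact: N2. Qed.

Lemma tpos : (3 <= n)%N -> 0 < t.
Proof.
move=> h; rewrite /t divr_gt0 // ?subr_gt0 ?b3 //.
by rewrite /N ltr_nat.
Qed.

Let y i := (1 - alpha - t) + t * dR i.
Let SR u := \sum_(i | e u i) dR i.

Lemma dR1 i : 1 <= dR i.
Proof. by rewrite /dR ler1n; apply: deg_ge1. Qed.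

Lemma dRN i : dR i <= N - 1.
Proof. by rewrite -Nm1 /dR ler_nat; apply: deg_le. Qed.

Lemma SRN u : SR u <= N - 1.
Proof. by rewrite -Nm1 /SR /dR -natr_sum ler_nat; apply: S_le. Qed.

Lemma ypos i : 0 < y i.
Proof. exact: ar_ypos a1 t0 (dR1 i). Qed.

Lemma ysum u : \sum_(i | e u i) y i = (1 - alpha - t) * dR u + t * SR u.
Proof. by rewrite /y big_split /= sum_const_nb -mulr_sumr. Qed.

Let brk := (1 - alpha) - t * (b + 1 - alpha * N).

Lemma brk0 u : (dR u - 1) * brk = 0.
Proof.
case: (eqVneq n 2) => [E|ne].
  have h : N - 1 = 1 by rewrite /N E; ring.
  have : dR u = 1 by apply/le_anti; rewrite dR1 andbT; have := dRN u; rewrite h.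
  by move=> ->; rewrite subrr mul0r.
have : brk * (N - 2) = 0.
  have -> : brk * (N - 2) = (1 - alpha) * (N - 2) - t * (N - 2) * (b + 1 - alpha * N)
    by rewrite /brk; ring.
  rewrite tN.
  have -> : (1 - alpha) * (N - 2) - (b - 1) * (b + 1 - alpha * N) =
     - (b ^+ 2 - alpha * N * b + (N - 1) * (2 * alpha - 1)) by ring.
  by rewrite KE oppr0.
move/eqP; rewrite mulf_eq0 => /orP [/eqP ->|]; first by rewrite mulr0.
rewrite subr_eq0 eqr_nat => /eqP E; by rewrite E eqxx in ne.
Qed.

Lemma KId u : \sum_i y i * M i u - b * y u = (1-alpha)*t*(SR u - (N-1))
  + alpha*t*(dR u - 1)*(dR u - (N-1)) + (dR u - 1) * brk + (1-alpha)*(t*(N-2) - (b-1)).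
Proof. rewrite colsum ysum /y /brk; ring. Qed.

Lemma h1 u : (1-alpha)*t*(SR u - (N-1)) <= 0.
Proof.
have ha : 0 <= 1 - alpha by rewrite subr_ge0; exact: ltW.
have hs : SR u - (N - 1) <= 0 by rewrite subr_le0 SRN.
by rewrite mulr_ge0_le0 // mulr_ge0 // t0.
Qed.

Lemma h2 u : alpha*t*(dR u - 1)*(dR u - (N-1)) <= 0.
Proof.
apply: mulr_ge0_le0; last by rewrite subr_le0 dRN.
apply: mulr_ge0; [apply: mulr_ge0 => //; exact: t0 | by rewrite subr_ge0 dR1].
Qed.

Lemma KI u : \sum_i y i * M i u <= b * y u.
Proof.
apply: (ar_le _ (h1 u) (h2 u)); by rewrite KId brk0 tN subrr mulr0 !addr0.
Qed.

Lemma KIeq u : \sum_i y i * M i u = b * y u -> (1-alpha)*t*(SR u - (N-1)) = 0.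
Proof.
apply: (ar_eq _ (h1 u) (h2 u)); by rewrite KId brk0 tN subrr mulr0 !addr0.
Qed.

Lemma Mge0 i j : 0 <= M i j.
Proof.
have ha : 0 <= 1 - alpha by rewrite subr_ge0 ltW.
by rewrite Mij addr_ge0 // mulr_ge0 // ?mulr_ge0 ?ler0n.
Qed.

Lemma Me i j : e i j -> M i j = 1 - alpha.
Proof.
move=> eij; have ij : i != j by apply/eqP => E; rewrite E irr in eij.
by rewrite Mij (negbTE ij) eij /=; ring.
Qed.

Lemma main_bound (lam : R) (v : 'rV[R]_n) : v *m M = lam *: v -> v != 0 ->
  `|lam| <= b /\ (lam = b -> is_star e).
Proof.
move=> Hv v0.
have ev j : \sum_i v 0 i * M i j = lam * v 0 j.
  by have := congr1 (fun A : 'rV_n => A 0 j) Hv; rewrite !mxE.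
have h0 : (0 < n)%N by apply: leq_trans n2.
pose F i := `|v 0 i| / y i.
have [j _ Hj] := @arg_maxP _ _ 'I_n (Ordinal h0) predT F isT.
pose z := F j.
have Hle i : `|v 0 i| <= z * y i.
  by have := Hj i isT; rewrite /= /F ler_pdivrMr ?ypos.
have zj : `|v 0 j| = z * y j by rewrite /z /F divfK // lt0r_neq0 // ypos.
have zpos : 0 < z.
  have [i vi] : exists i, v 0 i != 0.
    case: (pickP (fun i => v 0 i != 0)) => [i vi|H]; first by exists i.
    move/eqP: v0; case; apply/rowP => k; rewrite !mxE.
    by move/negbFE: (H k) => /eqP.
  have : 0 < z * y i by apply: lt_le_trans (Hle i); rewrite normr_gt0.
  by rewrite pmulr_lgt0 // ypos.
have chain u : `|lam| * `|v 0 u| <= \sum_i `|v 0 i| * M i u /\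
               \sum_i `|v 0 i| * M i u <= z * \sum_i y i * M i u.
  split.
    rewrite -normrM -ev; apply: le_trans (ler_norm_sum _ _ _) _.
    by apply: ler_sum => i _; rewrite normrM (ger0_norm (Mge0 i u)).
  rewrite mulr_sumr; apply: ler_sum => i _.
  by rewrite mulrA ler_pM // ?Mge0 ?Hle.
split.
  have [c1 c2] := chain j; have k := KI j.
  have : `|lam| * (z * y j) <= b * (z * y j).
    rewrite -zj; apply: le_trans c1 (le_trans c2 _).
    by rewrite zj mulrCA ler_pM2l.
  by rewrite ler_pM2r // mulr_gt0 // ypos.
move=> lb.
have b0 : 0 <= b by apply: le_trans b1; exact: ler01.
pose A : {pred 'I_n} := [pred i | `|v 0 i| == z * y i].
have key u : u \in A -> (forall i, e u i -> i \in A) /\ \sum_i y i * M i u = b * y u.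
  rewrite inE => /eqP Au.
  have [c1 c2] := chain u; have c3 := KI u.
  rewrite lb (ger0_norm b0) Au in c1.
  have [PQ Qb] := ar_sq zpos c1 c2 c3.
  split => // i eui.
  have S0 : \sum_k (z * y k - `|v 0 k|) * M k u = 0.
    under eq_bigr => k _ do rewrite mulrBl -mulrA.
    by rewrite sumrB -mulr_sumr -PQ subrr.
  have nn : forall k, true -> 0 <= (z * y k - `|v 0 k|) * M k u.
    move=> k _; apply: mulr_ge0 (Mge0 k u); by rewrite subr_ge0.
  have := @psumr_eq0P _ _ _ _ nn S0 i isT.
  rewrite Me ?(sym i u) // => /eqP; rewrite mulf_eq0 => /orP [|H].
    by rewrite subr_eq0 inE eq_sym.
  exfalso; move: H; rewrite subr_eq0 => /eqP H; move: a1; by rewrite -H ltxx.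
have clA : closed e A.
  move=> x x' exx'; apply/idP/idP => H.
    exact: (key x H).1 x' exx'.
  have ex : e x' x by rewrite sym.
  exact: (key x' H).1 x ex.
have [l [w [lw Hl]]] := leaf irr sym acy conn n2.
have Aj : j \in A by rewrite inE zj.
have Al : l \in A by rewrite -(closed_connect clA (conn j l)).
have E := KIeq ((key l Al).2).
have SRl : SR l = dR w.
  rewrite /SR (big_pred1 w) // => x; apply/idP/eqP => [/Hl //|->//].
apply: (center irr sym acy (w := w)).
case: (eqVneq n 2) => [n2e|ne].
  move: (deg_le irr w) (deg_ge1 conn n2 w); move: n2e; lia.
have n3 : (3 <= n)%N by move: n2 ne; lia.
move: E; rewrite SRl => /eqP; rewrite mulf_eq0 mulf_eq0 subr_eq0 (gt_eqF (tpos n3)) orbF.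
case/orP => [/eqP H|]; first by move: a1; rewrite -H ltxx.
rewrite subr_eq0 -Nm1 /dR eqr_nat => /eqP //.
Qed.

Lemma star_deg c : (forall i j, e i j = (i != j) && ((i == c) || (j == c))) ->
  dR c = N - 1 /\ forall i, i != c -> dR i = 1.
Proof.
move=> Hc; split.
  rewrite /dR /vdeg (@eq_card _ _ [set~ c]); first by rewrite cardsC1 card_ord Nm1.
  by move=> i; rewrite !inE Hc eqxx orTb andbT eq_sym.
move=> i ic; rewrite /dR /vdeg (@eq_card _ _ [set c]); first by rewrite cards1.
move=> j; rewrite !inE Hc (negbTE ic) /=.
by case: (eqVneq j c) => [->|]; rewrite ?andbT ?andbF // eq_sym.
Qed.

Lemma star_eig : is_star e -> eigenvalue M b.
Proof.
case=> c Hc.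
have [dc di] := star_deg Hc.
pose v : 'rV[R]_n := \row_i (if i == c then b - alpha else 1 - alpha).
apply/eigenvalueP; exists v; last first.
  apply/eqP => /rowP/(_ c); rewrite !mxE eqxx => /eqP; rewrite subr_eq0 => /eqP H.
  by move: a1; rewrite -H => /lt_le_trans/(_ b1); rewrite ltxx.
apply/rowP => j; rewrite !mxE (colsum (fun i => v 0 i)).
case: (eqVneq j c) => [->|jc].
  rewrite (eq_bigr (fun _ => 1 - alpha)); last first.
    move=> i; rewrite Hc eqxx orTb andbT => ci; by rewrite mxE eq_sym (negbTE ci).
  rewrite sum_const_nb dc mxE eqxx.
  have E1 : alpha * (N - 1) * (b - alpha) + (1 - alpha) * ((1 - alpha) * (N - 1)) - b * (b - alpha)
    = - (b ^+ 2 - alpha * N * b + (N - 1) * (2 * alpha - 1)) by ring.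
  by apply/eqP; rewrite -subr_eq0 E1 KE oppr0.
rewrite (big_pred1 c); last first.
  move=> i; rewrite /= Hc (negbTE jc) /=.
  by case: (eqVneq i c) => [->|]; rewrite ?andbT ?andbF // eq_sym.
rewrite !mxE eqxx (negbTE jc) di //; ring.
Qed.

End Alg.

Lemma ar_bge1 (R : realFieldType) (a N s b : R) :
  s ^+ 2 = (2 - a * N) ^+ 2 + 4 * (N - 2) * (1 - a) -> 0 <= s -> 2 <= N -> a <= 1 ->
  b * 2 = a * N + s -> 1 <= b.
Proof.
move=> Hs s0 N2 a1 hb.
have h : 2 - a * N <= s.
  case: (lerP (2 - a * N) s) => // H.
  have : 0 <= 4 * (N - 2) * (1 - a) by apply: mulr_ge0; [apply: mulr_ge0 => //; lra | lra].
  nra.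
lra.
Qed.

Lemma ar_bgt1 (R : realFieldType) (a N s b : R) :
  s ^+ 2 = (2 - a * N) ^+ 2 + 4 * (N - 2) * (1 - a) -> 0 <= s -> 2 < N -> a < 1 ->
  b * 2 = a * N + s -> 1 < b.
Proof.
move=> Hs s0 N2 a1 hb.
have h : 2 - a * N < s.
  case: (ltrP (2 - a * N) s) => // H.
  have : 0 < 4 * (N - 2) * (1 - a) by apply: mulr_gt0; [apply: mulr_gt0 => //; lra | lra].
  nra.
lra.
Qed.

Lemma ar_bN (R : realFieldType) (N s b : R) :
  s ^+ 2 = (2 - N) ^+ 2 -> 0 <= s -> 2 <= N -> b * 2 = N + s -> b = N - 1.
Proof. move=> Hs s0 N2 hb; nra. Qed.

Section One.
Variables (R : rcfType) (n : nat) (e : rel 'I_n) (alpha : R).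
Hypothesis irr : irreflexive e.
Hypothesis sym : symmetric e.
Hypothesis ae : alpha = 1.

Lemma one_ev lam : eigenvalue (@A_alpha R n e alpha) lam -> exists i, lam = (vdeg e i)%:R.
Proof.
case/eigenvalueP => v Hv v0.
have [i vi] : exists i, v 0 i != 0.
  case: (pickP (fun i => v 0 i != 0)) => [i vi|H]; first by exists i.
  move/eqP: v0; case; apply/rowP => k; rewrite !mxE.
  by move/negbFE: (H k) => /eqP.
exists i.
have := congr1 (fun A : 'rV_n => A 0 i) Hv; rewrite !mxE (colsum alpha sym (fun k => v 0 k)) ae.
rewrite subrr mul0r addr0 mul1r => /eqP; rewrite -subr_eq0 -mulrBl mulf_eq0 (negbTE vi) orbF.
by rewrite subr_eq0 => /eqP.
Qed.

Lemma one_star : is_star e -> eigenvalue (@A_alpha R n e alpha) (n.-1)%:R.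
Proof.
case=> c Hc.
pose v : 'rV[R]_n := \row_i (i == c)%:R.
apply/eigenvalueP; exists v; last first.
  by apply/eqP => /rowP/(_ c); rewrite !mxE eqxx => /eqP; rewrite oner_eq0.
apply/rowP => j; rewrite !mxE (colsum alpha sym (fun k => v 0 k)) ae subrr mul0r addr0 mul1r !mxE.
case: (eqVneq j c) => [->|jc]; last by rewrite !mulr0.
rewrite !mulr1; congr (_%:R).
rewrite /vdeg (@eq_card _ _ [set~ c]); first by rewrite cardsC1 card_ord.
by move=> i; rewrite !inE Hc eqxx orTb andbT eq_sym.
Qed.

End One.

Unset Implicit Arguments.

Theorem theorem2 (R : rcfType) (n : nat) (alpha : R) (e : rel 'I_n) (rho : R) :
  (2 <= n)%N -> 0 <= alpha <= 1 -> is_tree e ->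
  is_spectral_radius (@A_alpha R n e alpha) rho ->
  let b := (alpha * n%:R
            + Num.sqrt (alpha ^+ 2 * n%:R ^+ 2 + 4%:R * (n%:R - 1) * (1 - 2%:R * alpha)))
           / 2%:R in
  rho <= b /\ (rho = b <-> is_star e).
Proof.
move=> n2 /andP [a0 a1'] [[irr sym] conn acy] [evr maxr] b.
have N2 : 2 <= n%:R :> R by rewrite ler_nat.
set D := alpha ^+ 2 * n%:R ^+ 2 + 4%:R * (n%:R - 1) * (1 - 2%:R * alpha).
have DE : D = (2 - alpha * n%:R) ^+ 2 + 4 * (n%:R - 2) * (1 - alpha) by rewrite /D; ring.
have D0 : 0 <= D.
  rewrite DE addr_ge0 ?sqr_ge0 // mulr_ge0 // ?subr_ge0 // mulr_ge0 // subr_ge0 //.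
have s0 : 0 <= Num.sqrt D by apply: sqrtr_ge0.
have s2 : Num.sqrt D ^+ 2 = D by apply: sqr_sqrtr.
have hb : b * 2 = alpha * n%:R + Num.sqrt D by rewrite /b divfK // pnatr_eq0.
have KE : b ^+ 2 - alpha * n%:R * b + (n%:R - 1) * (2 * alpha - 1) = 0.
  have H4 : 4 * (b ^+ 2 - alpha * n%:R * b + (n%:R - 1) * (2 * alpha - 1)) =
     Num.sqrt D ^+ 2 - D.
    have -> : 4 * (b ^+ 2 - alpha * n%:R * b + (n%:R - 1) * (2 * alpha - 1)) =
       (b * 2) ^+ 2 - 2 * alpha * n%:R * (b * 2) + 4 * (n%:R - 1) * (2 * alpha - 1) by ring.
    rewrite hb /D; ring.
  move: H4; rewrite s2 subrr => /eqP; rewrite mulf_eq0 pnatr_eq0 /= => /eqP //.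
have b1 : 1 <= b.
  by apply: (ar_bge1 _ s0 N2 a1' hb); rewrite s2 DE.
case: (eqVneq alpha 1) => [ae|ane].
  have bN : b = n%:R - 1.
    apply: (ar_bN _ s0 N2); last by rewrite hb ae mul1r.
    by rewrite s2 DE ae subrr mulr0 addr0 mul1r.
  have bN' : b = (n.-1)%:R.
    have h0 : (0 < n)%N by apply: leq_trans n2.
    by rewrite bN -{1}(prednK h0) -natr1 addrK.
  have [i ri] := one_ev sym ae evr.
  have rb : rho <= b by rewrite ri bN' ler_nat; apply: deg_le.
  split => //; split.
    move=> rhob; apply: (center irr sym acy (w := i)).
    by apply/eqP; rewrite -(eqr_nat R) -bN' -ri rhob.
  move=> st; apply/le_anti; rewrite rb /= bN'.
  by apply: maxr; apply: one_star sym ae st.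
have a1 : alpha < 1 by rewrite lt_neqAle ane.
have b3 : (3 <= n)%N -> 1 < b.
  move=> n3; apply: (ar_bgt1 _ s0 _ a1 hb); first by rewrite s2 DE.
  by rewrite ltr_nat.
have [v Hv v0] := eigenvalueP evr.
have [B S] := main_bound irr sym acy conn n2 a0 a1 KE b1 b3 Hv v0.
have rb : rho <= b by apply: le_trans (ler_norm rho) B.
split => //; split => // st.
apply/le_anti; rewrite rb /=; apply: maxr.
have H := star_eig sym n2 a1 KE b1 st; exact: H.
Qed.
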